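(* Consider the Lohe hermitian sphere model $$\dot z_j=\Omega_jz_j+\kappa_0\big(z_c\langle z_j,z_j\rangle-z_j\langle z_c,z_j\rangle\big)+\kappa_1\big(\langle z_j,z_c\rangle-\langle z_c,z_j\rangle\big)z_j,\qquad j=1,\dots,N.$$ Assume the following hold: - $\Omega_j=\Omega$ for all $j$, for a skew-hermitian $d\times d$ matrix $\Omega$; - $0<\kappa_1<\frac14\kappa_0$; - $|z_j^0|=1$ for all $j$; - $\rho^0>\frac{N-2}{N}$. Let $\{z_j\}$ be the global solution with $z_j(0)=z_j^0$. Then for all $i,j$, $\langle z_i(t),z_j(t)\rangle\to1$ exponentially fast as $t\to\infty$. In particular $\max_{i,j}|z_i(t)-z_j(t)|\to0$ exponentially fast.
   Context: Notation: - $\langle z,w\rangle=\sum_\alpha\overline{z_\alpha}w_\alpha$ on $\mathbb C^d$, and $|z|=\langle z,z\rangle^{1/2}$; - $z_c:=\frac1N\sum_kz_k$; - the $\Omega_j$ are skew-hermitian matrices; - $\kappa_0,\kappa_1$ are real coupling constants; - $\rho^0:=\big|\frac1N\sum_{j=1}^Nz_j^0\big|$. *)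

(* Defs.v *)
From Stdlib Require Import Reals.
From Coquelicot Require Import Coquelicot.
Open Scope R_scope.

(* Vectors of C^d are functions nat -> C; only the indices alpha < d matter. *)
Definition cvec := nat -> C.

Fixpoint csum (n : nat) (f : nat -> C) : C :=
  match n with
  | O => RtoC 0
  | S m => Cplus (csum m f) (f m)
  end.

Definition cinner (d : nat) (z w : cvec) : C :=
  csum d (fun a => Cmult (Cconj (z a)) (w a)).

Definition cnorm (d : nat) (z : cvec) : R := sqrt (fst (cinner d z z)).

Definition matvec (d : nat) (A : nat -> nat -> C) (z : cvec) : cvec :=
  fun a => csum d (fun b => Cmult (A a b) (z b)).

Definition skew_hermitian (d : nat) (A : nat -> nat -> C) : Prop :=
  forall a b, (a < d)%nat -> (b < d)%nat -> A a b = Copp (Cconj (A b a)).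

Definition centroid (N : nat) (z : nat -> cvec) : cvec :=
  fun a => Cmult (RtoC (/ INR N)) (csum N (fun k => z k a)).

Definition lohe_rhs (d N : nat) (Omega : nat -> nat -> C) (k0 k1 : R)
    (z : nat -> cvec) (j : nat) : cvec :=
  let zc := centroid N z in
  fun a =>
    Cplus (matvec d Omega (z j) a)
   (Cplus (Cmult (RtoC k0)
            (Cminus (Cmult (zc a) (cinner d (z j) (z j)))
                    (Cmult (z j a) (cinner d zc (z j)))))
          (Cmult (Cmult (RtoC k1) (Cminus (cinner d (z j) zc) (cinner d zc (z j))))
                 (z j a))).

(* Main.v *)
Require Import Defs.
From Stdlib Require Import Reals Lra Lia Psatz Arith.
From Coquelicot Require Import Coquelicot.
Open Scope R_scope.

Ltac cpair := apply injective_projections; simpl; ring.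

Fixpoint rsum (n : nat) (f : nat -> R) : R :=
  match n with O => 0 | S m => rsum m f + f m end.

Lemma rsum_ext n f g : (forall k, (k < n)%nat -> f k = g k) -> rsum n f = rsum n g.
Proof. induction n; intros H; simpl; auto. rewrite IHn, H; auto. Qed.

Lemma rsum_le n f g : (forall k, (k < n)%nat -> f k <= g k) -> rsum n f <= rsum n g.
Proof. induction n; intros H; simpl; [lra|]. assert (H1 := H n (Nat.lt_succ_diag_r n)).
 assert (rsum n f <= rsum n g) by (apply IHn; auto). lra. Qed.

Lemma rsum_nonneg n f : (forall k, (k < n)%nat -> 0 <= f k) -> 0 <= rsum n f.
Proof. intros H. replace 0 with (rsum n (fun _ => 0)). apply rsum_le; auto.
 induction n; simpl; auto. rewrite IHn; auto. ring. Qed.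

Lemma rsum_term n f k : (forall i, (i < n)%nat -> 0 <= f i) -> (k < n)%nat -> f k <= rsum n f.
Proof. induction n; intros H Hk; [lia|]. simpl. destruct (Nat.eq_dec k n).
 - subst. assert (0 <= rsum n f) by (apply rsum_nonneg; auto). lra.
 - assert (f k <= rsum n f) by (apply IHn; auto; lia). assert (0 <= f n) by auto. lra. Qed.

Lemma rsum_lin n f g a b : rsum n (fun k => a * f k + b * g k) = a * rsum n f + b * rsum n g.
Proof. induction n; simpl; [ring|rewrite IHn; ring]. Qed.

Lemma rsum_const n c : rsum n (fun _ => c) = INR n * c.
Proof. induction n; [simpl; ring|]. change (rsum (S n) (fun _ => c)) with (rsum n (fun _ => c) + c).
 rewrite IHn, S_INR. ring. Qed.

Lemma fst_csum n f : fst (csum n f) = rsum n (fun k => fst (f k)).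
Proof. induction n; simpl; auto. rewrite IHn; auto. Qed.
Lemma snd_csum n f : snd (csum n f) = rsum n (fun k => snd (f k)).
Proof. induction n; simpl; auto. rewrite IHn; auto. Qed.

Lemma csum_ext n f g : (forall k, (k < n)%nat -> f k = g k) -> csum n f = csum n g.
Proof. induction n; intros H; simpl; auto. rewrite IHn, H; auto. Qed.

Lemma csum_plus n f g : csum n (fun k => (f k + g k)%C) = (csum n f + csum n g)%C.
Proof. induction n; simpl; [cpair|rewrite IHn; ring]. Qed.

Lemma csum_scal n c f : csum n (fun k => (c * f k)%C) = (c * csum n f)%C.
Proof. induction n; simpl; [cpair|rewrite IHn; ring]. Qed.

Lemma csum_opp n f : csum n (fun k => (- f k)%C) = (- csum n f)%C.
Proof. induction n; simpl; [cpair|rewrite IHn; ring]. Qed.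

Lemma csum_zero n : csum n (fun _ => RtoC 0) = RtoC 0.
Proof. induction n; simpl; [auto|rewrite IHn; ring]. Qed.

Lemma csum_conj n f : Cconj (csum n f) = csum n (fun k => Cconj (f k)).
Proof. induction n; simpl. cpair. rewrite Cplus_conj, IHn; auto. Qed.

Lemma csum_swap n m (f : nat -> nat -> C) :
  csum n (fun i => csum m (fun j => f i j)) = csum m (fun j => csum n (fun i => f i j)).
Proof. induction n; simpl. symmetry; apply csum_zero.
 rewrite IHn. rewrite <- csum_plus. reflexivity. Qed.

Lemma csum_lin4 n f1 f2 f3 f4 c2 c3 c4 :
  csum n (fun k => (f1 k + c2 * f2 k + c3 * f3 k + c4 * f4 k)%C)
  = (csum n f1 + c2 * csum n f2 + c3 * csum n f3 + c4 * csum n f4)%C.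
Proof. induction n; simpl; [cpair|rewrite IHn; ring]. Qed.

Lemma cinner_ext d u u' v v' : (forall a, (a < d)%nat -> u a = u' a) ->
  (forall a, (a < d)%nat -> v a = v' a) -> cinner d u v = cinner d u' v'.
Proof. intros Hu Hv. unfold cinner. apply csum_ext. intros k Hk. rewrite Hu, Hv; auto. Qed.

Lemma cinner_conj d u v : cinner d v u = Cconj (cinner d u v).
Proof. unfold cinner. rewrite csum_conj. apply csum_ext. intros; cpair. Qed.

Lemma cinner_scal_r d u c v : cinner d u (fun a => (c * v a)%C) = (c * cinner d u v)%C.
Proof. unfold cinner. rewrite <- csum_scal. apply csum_ext. intros; ring. Qed.

Lemma cinner_scalR_l d r u v : cinner d (fun a => (RtoC r * u a)%C) v = (RtoC r * cinner d u v)%C.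
Proof. unfold cinner. rewrite <- csum_scal. apply csum_ext. intros; cpair. Qed.

Lemma cinner_csum_r d N u (v : nat -> cvec) :
  cinner d u (fun a => csum N (fun k => v k a)) = csum N (fun k => cinner d u (v k)).
Proof. unfold cinner. rewrite <- csum_swap. apply csum_ext. intros. rewrite <- csum_scal. reflexivity. Qed.

Lemma matvec_csum d Om N (v : nat -> cvec) a :
  matvec d Om (fun b => csum N (fun k => v k b)) a = csum N (fun k => matvec d Om (v k) a).
Proof. unfold matvec. rewrite <- csum_swap. apply csum_ext. intros. rewrite <- csum_scal. reflexivity. Qed.

Lemma fst_cinner_self d u : fst (cinner d u u) = rsum d (fun a => fst (u a) * fst (u a) + snd (u a) * snd (u a)).
Proof. unfold cinner. rewrite fst_csum. apply rsum_ext. intros. simpl. ring. Qed.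

Lemma snd_cinner_self d u : snd (cinner d u u) = 0.
Proof. unfold cinner. rewrite snd_csum. replace 0 with (rsum d (fun _ => 0)).
 apply rsum_ext. intros. simpl. ring. rewrite rsum_const. ring. Qed.

Lemma cinner_self_nonneg d u : 0 <= fst (cinner d u u).
Proof. rewrite fst_cinner_self. apply rsum_nonneg. intros. nra. Qed.

Lemma cinner_self_real d u : cinner d u u = RtoC (fst (cinner d u u)).
Proof. apply injective_projections; simpl; auto. apply snd_cinner_self. Qed.

Lemma skew_re d Om u : skew_hermitian d Om -> fst (cinner d u (matvec d Om u)) = 0.
Proof.
  intros Hs.
  set (F := fun a b => (Cconj (u a) * (Om a b * u b))%C).
  assert (E1 : cinner d u (matvec d Om u) = csum d (fun a => csum d (fun b => F a b))).
  { unfold cinner, matvec. apply csum_ext. intros. rewrite <- csum_scal. reflexivity. }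
  assert (E2 : Cconj (cinner d u (matvec d Om u)) = (- cinner d u (matvec d Om u))%C).
  { rewrite E1. transitivity (csum d (fun a => csum d (fun b => (- F b a)%C))).
    { rewrite csum_conj. apply csum_ext; intros a Ha. rewrite csum_conj. apply csum_ext; intros b Hb.
      unfold F. rewrite (Hs a b); auto. cpair. }
    rewrite (csum_ext d _ (fun a => (- csum d (fun b => F b a))%C)) by (intros; apply csum_opp).
    rewrite csum_opp. f_equal. apply csum_swap. }
  assert (H := f_equal fst E2). simpl in H. lra.
Qed.
Lemma csum_lin4s n f1 f2 f3 f4 c1 c2 c3 c4 :
  csum n (fun k => (c1 * f1 k + c2 * f2 k + c3 * f3 k + c4 * f4 k)%C)
  = (c1 * csum n f1 + c2 * csum n f2 + c3 * csum n f3 + c4 * csum n f4)%C.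
Proof. induction n; simpl; [cpair|rewrite IHn; ring]. Qed.

Lemma rsum_lin3 n f g h : rsum n (fun k => f k - 2 * g k + h k) = rsum n f - 2 * rsum n g + rsum n h.
Proof. induction n; simpl; [ring|rewrite IHn; ring]. Qed.

Lemma cinner_zero d u v : fst (cinner d u u) = 0 -> cinner d u v = RtoC 0.
Proof.
  intros H. rewrite fst_cinner_self in H.
  assert (Hz : forall a, (a < d)%nat -> fst (u a) = 0 /\ snd (u a) = 0).
  { intros a Ha.
    assert (T := rsum_term d (fun a => fst (u a) * fst (u a) + snd (u a) * snd (u a)) a
                  (fun i _ => ltac:(nra)) Ha). simpl in T. split; nra. }
  unfold cinner. rewrite <- (csum_zero d). apply csum_ext. intros a Ha.
  destruct (Hz a Ha) as [H1 H2]. apply injective_projections; simpl; rewrite H1, H2; ring.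
Qed.

Lemma cs d u v : fst (cinner d u v) * fst (cinner d u v) + snd (cinner d u v) * snd (cinner d u v)
   <= fst (cinner d u u) * fst (cinner d v v).
Proof.
  set (B := cinner d u v). set (A := fst (cinner d u u)). set (V := fst (cinner d v v)).
  assert (HA : 0 <= A) by apply cinner_self_nonneg.
  assert (HV : 0 <= V) by apply cinner_self_nonneg.
  destruct (Req_dec A 0) as [H0|H0].
  { unfold B. rewrite cinner_zero by exact H0. simpl. nra. }
  set (w := fun a => (RtoC A * v a - B * u a)%C).
  assert (Hw : cinner d w w = (RtoC (A*A) * cinner d v v + (- RtoC A * B) * cinner d v u
             + (- RtoC A * Cconj B) * cinner d u v + (B * Cconj B) * cinner d u u)%C).
  { unfold cinner. rewrite <- csum_lin4s. apply csum_ext. intros a Ha. unfold w. cpair. }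
  assert (Hn := cinner_self_nonneg d w). rewrite Hw in Hn.
  rewrite (cinner_conj d u v) in Hn. fold B in Hn.
  rewrite (cinner_self_real d v), (cinner_self_real d u) in Hn. fold A V in Hn.
  simpl in Hn.
  assert (A * (A * V - (fst B * fst B + snd B * snd B)) >= 0) by nra.
  assert (0 < A) by lra. nra.
Qed.

Lemma expand_diff d x y : fst (cinner d (fun a => (x a - y a)%C) (fun a => (x a - y a)%C))
  = fst (cinner d x x) - 2 * fst (cinner d y x) + fst (cinner d y y).
Proof. unfold cinner. rewrite !fst_csum. rewrite <- rsum_lin3. apply rsum_ext. intros. simpl. ring. Qed.

Lemma para d x y w : fst (cinner d (fun a => (x a - y a)%C) (fun a => (x a - y a)%C))
  <= 2 * fst (cinner d (fun a => (x a - w a)%C) (fun a => (x a - w a)%C))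
   + 2 * fst (cinner d (fun a => (y a - w a)%C) (fun a => (y a - w a)%C)).
Proof. rewrite !fst_cinner_self. rewrite <- rsum_lin. apply rsum_le. intros. simpl.
 generalize (fst (x k)) (snd (x k)) (fst (y k)) (snd (y k)) (fst (w k)) (snd (w k)).
 intros a1 a2 b1 b2 c1 c2.
 assert (0 <= (a1 + b1 - 2*c1) * (a1 + b1 - 2*c1)) by apply Rle_0_sqr.
 assert (0 <= (a2 + b2 - 2*c2) * (a2 + b2 - 2*c2)) by apply Rle_0_sqr. nra. Qed.

Lemma D_eq (f : R -> R) (x l l' : R) : is_derive f x l -> l = l' -> is_derive f x l'.
Proof. intros H E; subst; auto. Qed.
Lemma D_mult (f g : R -> R) x df dg : is_derive f x df -> is_derive g x dg ->
  is_derive (fun t => f t * g t) x (df * g x + f x * dg).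
Proof. intros. apply (is_derive_mult (K:=R_AbsRing)); auto. intros; apply Rmult_comm. Qed.
Lemma D_plus (f g : R -> R) x df dg : is_derive f x df -> is_derive g x dg ->
  is_derive (fun t => f t + g t) x (df + dg).
Proof. intros. apply (is_derive_plus (K:=R_AbsRing) (V:=R_NormedModule)); auto. Qed.
Lemma D_minus (f g : R -> R) x df dg : is_derive f x df -> is_derive g x dg ->
  is_derive (fun t => f t - g t) x (df - dg).
Proof. intros. apply (is_derive_minus (K:=R_AbsRing) (V:=R_NormedModule)); auto. Qed.
Lemma D_const (c x : R) : is_derive (fun _ => c) x 0.
Proof. apply (is_derive_const (K:=R_AbsRing) (V:=R_NormedModule)). Qed.
Lemma D_ext (f g : R -> R) x l : (forall t, f t = g t) -> is_derive f x l -> is_derive g x l.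
Proof. intros. eapply is_derive_ext; eauto. Qed.

Lemma der_fst (f : R -> C) x l : is_derive f x l -> is_derive (fun s => fst (f s)) x (fst l).
Proof. intros H. unfold is_derive in *. pose proof (filterdiff_comp _ _ _ _ H (filterdiff_linear _ (is_linear_fst (U:=R_NormedModule) (V:=R_NormedModule)))) as H2. exact H2. Qed.
Lemma der_snd (f : R -> C) x l : is_derive f x l -> is_derive (fun s => snd (f s)) x (snd l).
Proof. intros H. unfold is_derive in *. pose proof (filterdiff_comp _ _ _ _ H (filterdiff_linear _ (is_linear_snd (U:=R_NormedModule) (V:=R_NormedModule)))) as H2. exact H2. Qed.

Definition CD (f : R -> C) (t : R) (l : C) :=
  is_derive (fun s => fst (f s)) t (fst l) /\ is_derive (fun s => snd (f s)) t (snd l).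

Lemma CD_eq f t l l' : CD f t l -> l = l' -> CD f t l'.
Proof. intros H E; subst; auto. Qed.
Lemma CD_ext f g t l : (forall s, f s = g s) -> CD f t l -> CD g t l.
Proof. intros E [H1 H2]; split; eapply D_ext; eauto; intros; simpl; rewrite E; auto. Qed.
Lemma CD_const (c : C) t : CD (fun _ => c) t (RtoC 0).
Proof. split; apply D_const. Qed.
Lemma CD_plus f g t df dg : CD f t df -> CD g t dg -> CD (fun s => (f s + g s)%C) t (df + dg)%C.
Proof. intros [F1 F2] [G1 G2]; split; simpl; apply D_plus; assumption. Qed.
Lemma CD_mult f g t df dg : CD f t df -> CD g t dg -> CD (fun s => (f s * g s)%C) t (df * g t + f t * dg)%C.
Proof. intros [F1 F2] [G1 G2]; split; simpl.
 - eapply D_eq. apply D_minus; apply D_mult. exact F1. exact G1. exact F2. exact G2. cbv beta. ring.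
 - eapply D_eq. apply D_plus; apply D_mult. exact F1. exact G2. exact F2. exact G1. cbv beta. ring. Qed.
Lemma CD_conj f t df : CD f t df -> CD (fun s => Cconj (f s)) t (Cconj df).
Proof. intros [F1 F2]; split; simpl. exact F1.
 apply D_ext with (f := fun s => 0 - snd (f s)). intros; ring.
 eapply D_eq. apply D_minus. apply D_const. exact F2. ring. Qed.
Lemma CD_csum n (F : R -> nat -> C) F' t : (forall k, (k < n)%nat -> CD (fun s => F s k) t (F' k)) ->
  CD (fun s => csum n (F s)) t (csum n F').
Proof. induction n; intros H; simpl. apply CD_const.
 apply CD_plus. apply IHn. intros; apply H; lia. apply H; lia. Qed.

Lemma CD_cinner d (u v : R -> cvec) u' v' t :
  (forall a, (a < d)%nat -> CD (fun s => u s a) t (u' a)) ->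
  (forall a, (a < d)%nat -> CD (fun s => v s a) t (v' a)) ->
  CD (fun s => cinner d (u s) (v s)) t (cinner d u' (v t) + cinner d (u t) v')%C.
Proof. intros Hu Hv. unfold cinner. eapply CD_eq.
 apply (CD_csum d (fun s a => (Cconj (u s a) * v s a)%C)). intros k Hk.
 apply CD_mult; [apply CD_conj|]; auto.
 rewrite <- csum_plus. reflexivity. Qed.

Definition RC (f : R -> R) := filterlim f (at_right 0) (locally (f 0)).
Lemma RC_mult f g : RC f -> RC g -> RC (fun t => f t * g t).
Proof. intros Hf Hg. unfold RC.
 eapply filterlim_comp_2. exact Hf. exact Hg. apply (filterlim_mult (K:=R_AbsRing)). Qed.
Lemma RC_plus f g : RC f -> RC g -> RC (fun t => f t + g t).
Proof. intros Hf Hg. unfold RC.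
 eapply filterlim_comp_2. exact Hf. exact Hg. apply (filterlim_plus (V:=R_NormedModule)). Qed.
Lemma RC_const c : RC (fun _ => c).
Proof. unfold RC. apply filterlim_const. Qed.
Lemma RC_ext f g : (forall t, f t = g t) -> RC f -> RC g.
Proof. intros E H. unfold RC. rewrite <- E. eapply filterlim_ext; eauto. Qed.
Lemma RC_minus f g : RC f -> RC g -> RC (fun t => f t - g t).
Proof. intros. apply (RC_ext (fun t => f t + (-1) * g t)). intros; ring.
 apply RC_plus; auto. apply RC_mult; auto. apply RC_const. Qed.
Lemma RC_cont f : continuous f 0 -> RC f.
Proof. intros Hc P HP. destruct (Hc P HP) as [eps H]. exists eps. intros y Hy _. apply H. exact Hy. Qed.

Definition CR (f : R -> C) := RC (fun t => fst (f t)) /\ RC (fun t => snd (f t)).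
Lemma CR_of (f : R -> C) : filterlim f (at_right 0) (locally (f 0)) -> CR f.
Proof. intros H. split; intros P [eps HP].
 apply (H (fun y : C => P (fst y))). exists eps. intros y [Hy1 Hy2]. apply HP. exact Hy1.
 apply (H (fun y : C => P (snd y))). exists eps. intros y [Hy1 Hy2]. apply HP. exact Hy2. Qed.
Lemma CR_const c : CR (fun _ => c).
Proof. split; apply RC_const. Qed.
Lemma CR_plus f g : CR f -> CR g -> CR (fun s => (f s + g s)%C).
Proof. intros [F1 F2] [G1 G2]; split; simpl; apply RC_plus; auto. Qed.
Lemma CR_mult f g : CR f -> CR g -> CR (fun s => (f s * g s)%C).
Proof. intros [F1 F2] [G1 G2]; split; simpl.
 apply RC_minus; apply RC_mult; auto. apply RC_plus; apply RC_mult; auto. Qed.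
Lemma CR_conj f : CR f -> CR (fun s => Cconj (f s)).
Proof. intros [F1 F2]; split; simpl; auto.
 apply (RC_ext (fun t => 0 - snd (f t))). intros; ring. apply RC_minus; auto. apply RC_const. Qed.
Lemma CR_csum n (F : R -> nat -> C) : (forall k, (k < n)%nat -> CR (fun s => F s k)) ->
  CR (fun s => csum n (F s)).
Proof. induction n; intros H; simpl. apply CR_const. apply CR_plus; auto. Qed.
Lemma CR_cinner d (u v : R -> cvec) :
  (forall a, (a < d)%nat -> CR (fun s => u s a)) ->
  (forall a, (a < d)%nat -> CR (fun s => v s a)) ->
  CR (fun s => cinner d (u s) (v s)).
Proof. intros Hu Hv. unfold cinner. apply (CR_csum d (fun s a => (Cconj (u s a) * v s a)%C)).
 intros. apply CR_mult; [apply CR_conj|]; auto. Qed.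

Lemma mono (f df : R -> R) : RC f -> (forall t, 0 < t -> is_derive f t (df t)) ->
  (forall t, 0 < t -> df t <= 0) -> forall t, 0 <= t -> f t <= f 0.
Proof.
  intros Hrc Hd Hneg t Ht. destruct (Req_dec t 0) as [E|E]. subst; lra.
  assert (Hs : forall s, 0 < s < t -> f t <= f s).
  { intros s Hs.
    destruct (MVT_gen f s t df) as [c [Hc Hm]].
    - intros x Hx. apply Hd. rewrite Rmin_left in Hx by lra. lra.
    - intros x Hx. rewrite Rmin_left in Hx by lra. rewrite Rmax_right in Hx by lra.
      apply continuity_pt_filterlim. apply (ex_derive_continuous (K:=R_AbsRing) (V:=R_NormedModule)). exists (df x). apply Hd. lra.
    - rewrite Rmin_left in Hc by lra. rewrite Rmax_right in Hc by lra.
      assert (df c <= 0) by (apply Hneg; lra). nra. }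
  destruct (Rle_dec (f t) (f 0)) as [L|L]; auto. exfalso.
  assert (Heps : 0 < f t - f 0) by lra.
  assert (H := Hrc (fun y => Rabs (y - f 0) < f t - f 0)).
  destruct H as [del Hdel].
  { exists (mkposreal _ Heps). intros y Hy. exact Hy. }
  set (y := Rmin (del / 2) (t / 2)).
  assert (Hy0 : 0 < y). { unfold y. apply Rmin_pos. destruct del; simpl; lra. lra. }
  assert (Hy1 : y <= del / 2) by apply Rmin_l.
  assert (Hy2 : y <= t / 2) by apply Rmin_r.
  assert (Hb : Rabs (f y - f 0) < f t - f 0).
  { apply Hdel; auto. unfold ball; simpl. unfold AbsRing_ball, abs, minus, plus, opp; simpl.
    rewrite Rabs_right by lra. destruct del; simpl in *; lra. }
  assert (f t <= f y) by (apply Hs; lra).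
  apply Rabs_def2 in Hb. lra.
Qed.

Lemma mono_ge (f df : R -> R) : RC f -> (forall t, 0 < t -> is_derive f t (df t)) ->
  (forall t, 0 < t -> 0 <= df t) -> forall t, 0 <= t -> f 0 <= f t.
Proof. intros Hrc Hd Hpos t Ht.
  assert (H := mono (fun t => 0 - f t) (fun t => 0 - df t)).
  assert (0 - f t <= 0 - f 0); [|lra]. apply H; auto.
  apply RC_minus; auto; apply RC_const.
  intros; apply D_minus; auto; apply D_const.
  intros s Hs; specialize (Hpos s Hs); lra. Qed.

Lemma fst_Cplus (a b : C) : fst (a + b)%C = fst a + fst b.
Proof. reflexivity. Qed.
Lemma fst_Cconj (a : C) : fst (Cconj a) = fst a.
Proof. reflexivity. Qed.
Lemma fst_scalR r (c : C) : fst (RtoC r * c)%C = r * fst c.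
Proof. simpl. ring. Qed.

Lemma rhs_inner d N Om k0 k1 (z : nat -> cvec) j u :
  cinner d u (lohe_rhs d N Om k0 k1 z j) =
  (cinner d u (matvec d Om (z j))
   + RtoC k0 * cinner d u (centroid N z) * cinner d (z j) (z j)
   - RtoC k0 * cinner d (centroid N z) (z j) * cinner d u (z j)
   + RtoC k1 * (cinner d (z j) (centroid N z) - cinner d (centroid N z) (z j)) * cinner d u (z j))%C.
Proof.
  unfold cinner at 1.
  transitivity (csum d (fun a =>
     (1 * (Cconj (u a) * matvec d Om (z j) a)
      + (RtoC k0 * cinner d (z j) (z j)) * (Cconj (u a) * centroid N z a)
      + (- RtoC k0 * cinner d (centroid N z) (z j)) * (Cconj (u a) * z j a)
      + (RtoC k1 * (cinner d (z j) (centroid N z) - cinner d (centroid N z) (z j))) * (Cconj (u a) * z j a))%C)).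
  { apply csum_ext. intros a Ha. unfold lohe_rhs. cbv zeta beta. ring. }
  rewrite csum_lin4s. unfold cinner. ring.
Qed.

Lemma self_rhs d N Om k0 k1 (z : nat -> cvec) j : skew_hermitian d Om ->
  fst (cinner d (z j) (lohe_rhs d N Om k0 k1 z j)) = 0.
Proof.
  intros Hs. rewrite rhs_inner.
  rewrite (cinner_conj d (centroid N z) (z j)).
  rewrite (cinner_self_real d (z j)).
  generalize (skew_re d Om (z j) Hs).
  generalize (cinner d (z j) (matvec d Om (z j))) (cinner d (centroid N z) (z j)) (fst (cinner d (z j) (z j))).
  intros [T1 T2] [b1 b2] r HT. simpl in HT. simpl. rewrite HT. ring.
Qed.

Lemma sum_b d N (z : nat -> cvec) : (1 <= N)%nat ->
  csum N (fun k => cinner d (centroid N z) (z k)) = (RtoC (INR N) * cinner d (centroid N z) (centroid N z))%C.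
Proof.
  intros HN. assert (HN0 : INR N <> 0) by (apply not_0_INR; lia).
  rewrite <- cinner_csum_r. rewrite <- cinner_scal_r. apply cinner_ext; intros; auto.
  unfold centroid. apply injective_projections; simpl; field; auto.
Qed.

Lemma sum_T d N Om (z : nat -> cvec) : skew_hermitian d Om ->
  fst (csum N (fun k => cinner d (centroid N z) (matvec d Om (z k)))) = 0.
Proof.
  intros Hs. rewrite <- cinner_csum_r.
  rewrite (cinner_ext d _ (fun a => RtoC (/ INR N) * csum N (fun k => z k a))%C _
     (matvec d Om (fun b => csum N (fun k => z k b)))).
  2: intros; reflexivity.
  2: intros; symmetry; apply matvec_csum.
  rewrite cinner_scalR_l, fst_scalR, skew_re by auto. ring.
Qed.

Lemma gderiv_formula d N Om k0 k1 (z : nat -> cvec) : skew_hermitian d Om ->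
  (forall k, (k < N)%nat -> fst (cinner d (z k) (z k)) = 1) ->
  fst (cinner d (centroid N z) (centroid N (fun k => lohe_rhs d N Om k0 k1 z k)))
  = / INR N * rsum N (fun k =>
       k0 * (fst (cinner d (centroid N z) (centroid N z))
             - (fst (cinner d (centroid N z) (z k)) * fst (cinner d (centroid N z) (z k))
                - snd (cinner d (centroid N z) (z k)) * snd (cinner d (centroid N z) (z k))))
       + 2 * k1 * (snd (cinner d (centroid N z) (z k)) * snd (cinner d (centroid N z) (z k)))).
Proof.
  intros Hs Hn.
  change (centroid N (fun k => lohe_rhs d N Om k0 k1 z k)) with
    (fun a => RtoC (/ INR N) * csum N (fun k => lohe_rhs d N Om k0 k1 z k a))%C.
  rewrite cinner_scal_r, cinner_csum_r, fst_scalR. f_equal.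
  rewrite (csum_ext N _ (fun k => (cinner d (centroid N z) (matvec d Om (z k))
     + (RtoC k0 * cinner d (centroid N z) (centroid N z) * cinner d (z k) (z k)
   - RtoC k0 * cinner d (centroid N z) (z k) * cinner d (centroid N z) (z k)
   + RtoC k1 * (cinner d (z k) (centroid N z) - cinner d (centroid N z) (z k)) * cinner d (centroid N z) (z k)))%C)).
  2: { intros k Hk. rewrite rhs_inner. ring. }
  rewrite csum_plus, fst_Cplus, sum_T by auto. rewrite fst_csum. rewrite Rplus_0_l.
  apply rsum_ext. intros k Hk.
  rewrite (cinner_conj d (centroid N z) (z k)).
  rewrite (cinner_self_real d (z k)), (Hn k Hk).
  rewrite (cinner_self_real d (centroid N z)).
  generalize (cinner d (centroid N z) (z k)) (fst (cinner d (centroid N z) (centroid N z))).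
  intros [b1 b2] g. simpl. ring.
Qed.

Lemma E0 N (p q : nat -> R) g k0 k1 : 0 < k0 -> 0 < k1 -> (1 <= N)%nat ->
  (forall k, (k < N)%nat -> p k * p k + q k * q k <= g) ->
  0 <= 2 * (/ INR N * rsum N (fun k => k0 * (g - (p k * p k - q k * q k)) + 2 * k1 * (q k * q k))).
Proof.
  intros H0 H1 HN Hb. assert (0 < INR N) by (apply lt_0_INR; lia).
  assert (0 <= rsum N (fun k => k0 * (g - (p k * p k - q k * q k)) + 2 * k1 * (q k * q k))).
  { apply rsum_nonneg. intros k Hk. specialize (Hb k Hk).
    assert (0 <= q k * q k) by nra. nra. }
  assert (0 < / INR N) by (apply Rinv_0_lt_compat; auto). nra.
Qed.

Lemma key N (p q : nat -> R) g r0 k0 k1 : (1 <= N)%nat -> 0 < k0 -> 0 < k1 -> 0 < r0 ->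
  INR N * (1 - r0) < 2 -> r0 * r0 <= g ->
  (forall k, (k < N)%nat -> p k * p k + q k * q k <= g) -> rsum N p = INR N * g ->
  k0 * (r0 * r0) * (2 - INR N * (1 - r0)) * (1 - g)
  <= 2 * (/ INR N * rsum N (fun k => k0 * (g - (p k * p k - q k * q k)) + 2 * k1 * (q k * q k))).
Proof.
  intros HN Hk0 Hk1 Hr0 Hd Hg Hb Hs.
  assert (HNp : 0 < INR N) by (apply lt_0_INR; lia).
  assert (Hg0 : 0 <= g) by nra.
  set (rho := sqrt g).
  assert (Hrr : rho * rho = g) by (apply sqrt_sqrt; auto).
  assert (Hrho0 : 0 <= rho) by apply sqrt_pos.
  assert (Hrr0 : r0 <= rho).
  { destruct (Rle_dec r0 rho); auto. nra. }
  assert (Hp : forall k, (k < N)%nat -> - rho <= p k <= rho).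
  { intros k Hk. specialize (Hb k Hk). assert (0 <= q k * q k) by nra. split; nra. }
  assert (Hsum1 : rsum N (fun k => rho - p k) = INR N * rho - INR N * g).
  { rewrite (rsum_ext N _ (fun k => 1 * rho + (-1) * p k)) by (intros; ring).
    rewrite rsum_lin, rsum_const, Hs. ring. }
  assert (Hr1 : rho <= 1).
  { assert (0 <= rsum N (fun k => rho - p k)) by (apply rsum_nonneg; intros k Hk; specialize (Hp k Hk); lra).
    rewrite Hsum1 in H. rewrite <- Hrr in H.
    assert (0 <= rho * (1 - rho)).
    { apply (Rmult_le_reg_l (INR N)); auto. rewrite Rmult_0_r. lra. }
    destruct (Rle_dec rho 1); auto.
    assert (rho * (1 - rho) < 0). { apply Rmult_pos_neg; lra. } lra. }
  set (del := 2 - INR N * (1 - rho)).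
  assert (Hdel : 2 - INR N * (1 - r0) <= del) by (unfold del; nra).
  assert (Hterm : forall k, (k < N)%nat -> rho * del * (rho - p k) <= g - p k * p k).
  { intros k Hk.
    assert (T := rsum_term N (fun k => rho - p k) k (fun i Hi => ltac:(specialize (Hp i Hi); lra)) Hk).
    simpl in T. rewrite Hsum1 in T.
    assert (Hpk := Hp k Hk).
    assert (rho * del <= rho + p k).
    { unfold del. rewrite <- Hrr in T. nra. }
    rewrite <- Hrr. nra. }
  assert (Hsum2 : rho * del * (INR N * rho - INR N * g) <= rsum N (fun k => g - p k * p k)).
  { rewrite <- Hsum1.
    replace (rho * del * rsum N (fun k => rho - p k)) with (rsum N (fun k => (rho * del) * (rho - p k) + 0 * 0)).
    apply rsum_le. intros k Hk. specialize (Hterm k Hk). lra.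
    rewrite rsum_lin. ring. }
  assert (Hsum3 : k0 * rsum N (fun k => g - p k * p k) <=
     rsum N (fun k => k0 * (g - (p k * p k - q k * q k)) + 2 * k1 * (q k * q k))).
  { replace (k0 * rsum N (fun k => g - p k * p k)) with (rsum N (fun k => k0 * (g - p k * p k) + 0 * 0))
      by (rewrite rsum_lin; ring).
    apply rsum_le. intros k Hk. assert (0 <= q k * q k) by nra. nra. }
  assert (Hmain : k0 * (r0 * r0) * (2 - INR N * (1 - r0)) * (1 - g) <= 2 * k0 * rho * del * (rho - g)).
  { rewrite <- Hrr. assert (0 <= 2 - INR N * (1 - r0)) by lra.
    assert (0 <= 1 - rho) by lra.
    assert (r0 * r0 <= rho * rho) by nra.
    assert (A1 : (r0 * r0) * (2 - INR N * (1 - r0)) <= (rho * rho) * del) by nra.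
    assert (A2 : 1 - rho * rho <= 2 * (1 - rho)) by nra.
    assert (0 <= 1 - rho * rho) by nra.
    assert (0 <= (rho*rho) * del) by nra.
    assert (k0 * ((r0 * r0) * (2 - INR N * (1 - r0))) * (1 - rho * rho) <= k0 * ((rho * rho) * del) * (2 * (1 - rho))).
    { apply Rmult_le_compat; try lra.
      - apply Rmult_le_pos; [lra|]. apply Rmult_le_pos; nra.
      - apply Rmult_le_compat_l; lra. }
    replace (2 * k0 * rho * del * (rho - rho * rho)) with (k0 * ((rho * rho) * del) * (2 * (1 - rho))) by ring.
    lra. }
  assert (Hfin : 2 * k0 * rho * del * (rho - g) = 2 * (/ INR N * (k0 * (rho * del * (INR N * rho - INR N * g))))).
  { field. lra. }
  rewrite Hfin in Hmain.
  assert (0 < / INR N) by (apply Rinv_0_lt_compat; auto).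
  assert (Z1 : k0 * (rho * del * (INR N * rho - INR N * g)) <=
     rsum N (fun k => k0 * (g - (p k * p k - q k * q k)) + 2 * k1 * (q k * q k))).
  { apply Rle_trans with (k0 * rsum N (fun k => g - p k * p k)); [apply Rmult_le_compat_l; lra | exact Hsum3]. }
  assert (Z2 : / INR N * (k0 * (rho * del * (INR N * rho - INR N * g))) <=
     / INR N * rsum N (fun k => k0 * (g - (p k * p k - q k * q k)) + 2 * k1 * (q k * q k)))
    by (apply Rmult_le_compat_l; lra).
  lra.
Qed.

Lemma D_exp (lam t : R) : is_derive (fun s => exp (lam * s)) t (lam * exp (lam * t)).
Proof. auto_derive. auto. ring. Qed.

Lemma RC_exp (lam : R) : RC (fun s => exp (lam * s)).
Proof. apply RC_cont. apply (ex_derive_continuous (K:=R_AbsRing) (V:=R_NormedModule)).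
  exists (lam * exp (lam * 0)). apply D_exp. Qed.

Theorem theorem3p4
  (d N : nat) (Omega : nat -> nat -> C) (k0 k1 : R)
  (z0 : nat -> cvec) (z : R -> nat -> cvec) :
  (1 <= N)%nat ->
  skew_hermitian d Omega ->
  0 < k1 -> k1 < k0 / 4 ->
  (forall j, (j < N)%nat -> cnorm d (z0 j) = 1) ->
  cnorm d (centroid N z0) > (INR N - 2) / INR N ->
  (* z is a solution on [0, +oo) with z_j(0) = z_j^0 *)
  (forall j a, (j < N)%nat -> (a < d)%nat -> z 0 j a = z0 j a) ->
  (forall j a, (j < N)%nat -> (a < d)%nat ->
     filterlim (fun t => z t j a) (at_right 0) (locally (z 0 j a))) ->
  (forall t j a, 0 < t -> (j < N)%nat -> (a < d)%nat ->
     is_derive (fun s => z s j a) t (lohe_rhs d N Omega k0 k1 (z t) j a)) ->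
  exists C0 lam, 0 < C0 /\ 0 < lam /\
    forall t, 0 <= t -> forall i j, (i < N)%nat -> (j < N)%nat ->
      Cmod (Cminus (cinner d (z t i) (z t j)) (RtoC 1)) <= C0 * exp (- lam * t) /\
      cnorm d (fun a => Cminus (z t i a) (z t j a)) <= C0 * exp (- lam * t).
Proof.
  intros HN Hs Hk1 Hk12 Hnorm Hrho Hinit Hcont Hder.
  assert (Hk0 : 0 < k0) by lra.
  assert (HNp : 0 < INR N) by (apply lt_0_INR; lia).
  set (rhs := fun t k => lohe_rhs d N Omega k0 k1 (z t) k).
  assert (Dz : forall t j a, 0 < t -> (j < N)%nat -> (a < d)%nat ->
     CD (fun s => z s j a) t (rhs t j a)).
  { intros; split; [apply der_fst|apply der_snd]; apply Hder; auto. }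
  assert (Dzc : forall t a, 0 < t -> (a < d)%nat ->
     CD (fun s => centroid N (z s) a) t (centroid N (rhs t) a)).
  { intros t a Ht Ha. unfold centroid. eapply CD_eq. apply CD_mult. apply CD_const.
    apply (CD_csum N (fun s k => z s k a)). intros; apply Dz; auto. cbv beta. ring. }
  assert (Cz : forall j a, (j < N)%nat -> (a < d)%nat -> CR (fun s => z s j a)).
  { intros; apply CR_of; auto. }
  assert (Czc : forall a, (a < d)%nat -> CR (fun s => centroid N (z s) a)).
  { intros a Ha. unfold centroid. apply CR_mult. apply CR_const.
    apply (CR_csum N (fun s k => z s k a)). intros; auto. }
  assert (Hn : forall j t, (j < N)%nat -> 0 <= t -> fst (cinner d (z t j) (z t j)) = 1).
  { intros j t Hj Ht.
    assert (H0 : fst (cinner d (z 0 j) (z 0 j)) = 1).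
    { rewrite (cinner_ext d (z 0 j) (z0 j) (z 0 j) (z0 j)) by (intros; apply Hinit; auto).
      specialize (Hnorm j Hj). unfold cnorm in Hnorm.
      assert (Hp := cinner_self_nonneg d (z0 j)).
      rewrite <- (sqrt_sqrt (fst (cinner d (z0 j) (z0 j)))) by auto. rewrite Hnorm; ring. }
    assert (RCn : RC (fun s => fst (cinner d (z s j) (z s j)))).
    { apply (proj1 (CR_cinner d (fun s => z s j) (fun s => z s j) (fun a Ha => Cz j a Hj Ha) (fun a Ha => Cz j a Hj Ha))). }
    assert (Dn : forall s, 0 < s -> is_derive (fun s => fst (cinner d (z s j) (z s j))) s ((fun _ => 0) s)).
    { intros s Hs0.
      destruct (CD_cinner d (fun s => z s j) (fun s => z s j) (rhs s j) (rhs s j) s) as [D1 _].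
      1,2: intros; apply Dz; auto.
      eapply D_eq. exact D1.
      rewrite fst_Cplus, (cinner_conj d (z s j) (rhs s j)), fst_Cconj.
      unfold rhs. rewrite self_rhs by auto. ring. }
    apply Rle_antisym.
    - rewrite <- H0. apply (mono _ _ RCn Dn); auto. intros; lra.
    - rewrite <- H0. apply (mono_ge _ _ RCn Dn); auto. intros; lra. }
  pose (g := fun t => fst (cinner d (centroid N (z t)) (centroid N (z t)))).
  pose (b := fun t k => cinner d (centroid N (z t)) (z t k)).
  pose (Ef := fun t => 2 * (/ INR N * rsum N (fun k => k0 * (g t - (fst (b t k) * fst (b t k) - snd (b t k) * snd (b t k))) + 2 * k1 * (snd (b t k) * snd (b t k))))).
  assert (Dg : forall t, 0 < t -> is_derive g t (Ef t)).
  { intros t Ht.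
    destruct (CD_cinner d (fun s => centroid N (z s)) (fun s => centroid N (z s)) (centroid N (rhs t)) (centroid N (rhs t)) t) as [D1 _].
    1,2: intros; apply Dzc; auto.
    eapply D_eq. exact D1.
    rewrite fst_Cplus, (cinner_conj d (centroid N (z t)) (centroid N (rhs t))), fst_Cconj.
    unfold rhs. rewrite gderiv_formula; auto. 2: intros; apply Hn; auto; lra.
    unfold Ef, g, b. ring. }
  assert (Hbnd : forall t k, 0 <= t -> (k < N)%nat ->
     fst (b t k) * fst (b t k) + snd (b t k) * snd (b t k) <= g t).
  { intros t k Ht Hk. unfold b, g. eapply Rle_trans. apply cs.
    rewrite (Hn k t Hk Ht). lra. }
  assert (Hpsum : forall t, rsum N (fun k => fst (b t k)) = INR N * g t).
  { intros t. unfold b, g. rewrite <- fst_csum. rewrite sum_b by auto. apply fst_scalR. }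
  assert (HEf0 : forall t, 0 < t -> 0 <= Ef t).
  { intros t Ht. unfold Ef. apply E0; auto. intros k Hk. apply Hbnd; auto; lra. }
  assert (RCg : RC g).
  { apply (proj1 (CR_cinner d (fun s => centroid N (z s)) (fun s => centroid N (z s)) Czc Czc)). }
  pose (r0 := cnorm d (centroid N z0)).
  assert (Hg0 : g 0 = r0 * r0).
  { unfold g, r0, cnorm. rewrite sqrt_sqrt by apply cinner_self_nonneg.
    f_equal. apply cinner_ext; intros a Ha; unfold centroid; f_equal; apply csum_ext; intros; apply Hinit; auto. }
  assert (Hgmono : forall t, 0 <= t -> r0 * r0 <= g t).
  { intros t Ht. rewrite <- Hg0. apply (mono_ge g Ef RCg Dg HEf0); auto. }
  assert (Hr0pos : 0 < r0).
  { destruct (le_lt_dec 2 N) as [H2|H2].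
    - assert (0 <= (INR N - 2) / INR N).
      { apply Rmult_le_pos.
        - assert (2 <= INR N) by (replace 2 with (INR 2) by (simpl; ring); apply le_INR; auto). lra.
        - left; apply Rinv_0_lt_compat; lra. }
      unfold r0. lra.
    - assert (N = 1%nat) by lia. subst N. unfold r0.
      replace (cnorm d (centroid 1 z0)) with (cnorm d (z0 0%nat)). rewrite Hnorm; auto; lra.
      unfold cnorm. f_equal. f_equal. apply cinner_ext; intros a Ha;
      unfold centroid; simpl; rewrite Rinv_1; apply injective_projections; simpl; ring. }
  assert (Hdel : INR N * (1 - r0) < 2).
  { assert (E : (INR N - 2) / INR N * INR N = INR N - 2) by (field; lra).
    fold r0 in Hrho. nra. }
  pose (lam := k0 * (r0 * r0) * (2 - INR N * (1 - r0))).
  assert (Hlam : 0 < lam).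
  { unfold lam. apply Rmult_lt_0_compat; [|lra]. apply Rmult_lt_0_compat; nra. }
  pose (h := fun t => (1 - g t) * exp (lam * t)).
  assert (RCh : RC h).
  { apply RC_mult. apply RC_minus. apply RC_const. exact RCg. apply RC_exp. }
  assert (Dh : forall t, 0 < t -> is_derive h t ((0 - Ef t) * exp (lam * t) + (1 - g t) * (lam * exp (lam * t)))).
  { intros t Ht. unfold h. apply (D_mult (fun s => 1 - g s) (fun s => exp (lam * s))). apply (D_minus (fun _ => 1) g). apply D_const. apply Dg; auto. apply D_exp. }
  assert (Hhneg : forall t, 0 < t -> (0 - Ef t) * exp (lam * t) + (1 - g t) * (lam * exp (lam * t)) <= 0).
  { intros t Ht.
    assert (K : lam * (1 - g t) <= Ef t).
    { unfold lam, Ef. apply key; auto. apply Hgmono; lra. intros k Hk; apply Hbnd; auto; lra. }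
    assert (0 < exp (lam * t)) by apply exp_pos. nra. }
  assert (Hh : forall t, 0 <= t -> h t <= h 0).
  { apply (mono h _ RCh Dh Hhneg). }
  assert (Hdecay : forall t, 0 <= t -> 1 - g t <= (1 - r0 * r0) * exp (- lam * t)).
  { intros t Ht. specialize (Hh t Ht). unfold h in Hh. rewrite Rmult_0_r, exp_0, Rmult_1_r, Hg0 in Hh.
    assert (E : exp (lam * t) * exp (- lam * t) = 1).
    { rewrite <- exp_plus. replace (lam * t + - lam * t) with 0 by ring. apply exp_0. }
    assert (0 < exp (- lam * t)) by apply exp_pos.
    replace (1 - g t) with ((1 - g t) * exp (lam * t) * exp (- lam * t)) by (rewrite Rmult_assoc, E; ring).
    apply Rmult_le_compat_r; lra. }
  exists (2 * sqrt (INR N) + 1), (lam / 2).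
  assert (HsqN : 0 <= sqrt (INR N)) by apply sqrt_pos.
  split; [lra|]. split; [lra|].
  intros t Ht i j Hi Hj.
  pose (X := fst (cinner d (fun a => (z t i a - z t j a)%C) (fun a => (z t i a - z t j a)%C))).
  pose (D := fun k => fst (cinner d (fun a => (z t k a - centroid N (z t) a)%C) (fun a => (z t k a - centroid N (z t) a)%C))).
  assert (HD : forall k, (k < N)%nat -> D k = 1 - 2 * fst (b t k) + g t).
  { intros k Hk. unfold D. rewrite expand_diff. rewrite Hn by auto. reflexivity. }
  assert (HDsum : rsum N D = INR N * (1 - g t)).
  { rewrite (rsum_ext N D (fun k => 1 - 2 * fst (b t k) + g t)) by auto.
    rewrite rsum_lin3, !rsum_const, Hpsum. ring. }
  assert (HDle : forall k, (k < N)%nat -> D k <= INR N * (1 - g t)).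
  { intros k Hk. rewrite <- HDsum. apply rsum_term; auto. intros; apply cinner_self_nonneg. }
  assert (HX : X <= 4 * INR N * (1 - g t)).
  { unfold X. eapply Rle_trans. apply (para d (z t i) (z t j) (centroid N (z t))).
    assert (Di := HDle i Hi). assert (Dj := HDle j Hj). unfold D in Di, Dj. lra. }
  pose (e := exp (- (lam / 2) * t)).
  assert (He : 0 < e) by apply exp_pos.
  assert (Hee : exp (- lam * t) = e * e).
  { unfold e. rewrite <- exp_plus. f_equal. field. }
  assert (Hr02 : 0 <= r0 * r0) by nra.
  assert (HX2 : X <= (2 * sqrt (INR N) * e) * (2 * sqrt (INR N) * e)).
  { assert (Hd := Hdecay t Ht). rewrite Hee in Hd.
    replace ((2 * sqrt (INR N) * e) * (2 * sqrt (INR N) * e)) with (4 * (sqrt (INR N) * sqrt (INR N)) * (e * e)) by ring.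
    rewrite sqrt_sqrt by lra.
    assert (1 - g t <= e * e) by nra. nra. }
  assert (HsX : sqrt X <= (2 * sqrt (INR N) + 1) * e).
  { eapply Rle_trans. apply sqrt_le_1_alt. exact HX2. rewrite sqrt_square by nra. nra. }
  assert (HXh : X = 2 - 2 * fst (cinner d (z t i) (z t j))).
  { unfold X. rewrite expand_diff. rewrite !Hn by auto.
    rewrite (cinner_conj d (z t i) (z t j)), fst_Cconj. ring. }
  assert (Hcs := cs d (z t i) (z t j)). rewrite !Hn in Hcs by auto.
  split.
  - eapply Rle_trans; [|exact HsX]. unfold Cmod. apply sqrt_le_1_alt.
    rewrite HXh. generalize (cinner d (z t i) (z t j)) Hcs. intros [h1 h2] Hc. simpl in *. nra.
  - unfold cnorm. exact HsX.
Qed.
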